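(* Let $d \geq 1$ and $j \geq 0$. The space $w_{1^j2}(\mathbb{C}^d)$ is homotopy equivalent to $w_{1^j}(\mathbb{C}^d - pt)$, the configuration space of $j$ unordered distinct points in $\mathbb{C}^d$ with one point removed.
   Context: For a space $X$, $Sym^k(X)$ denotes the quotient of $X^k$ by the permutation action of the symmetric group on $k$ letters. A point of $Sym^k(X)$ determines a partition of $k$ by recording multiplicities of the points appearing in it. For a partition $\lambda$ of $k$, $w_\lambda(X)$ is the subspace of $Sym^k(X)$ of points with associated partition $\lambda$. Here $1^j2$ denotes the partition $1+\cdots+1+2$ of $j+2$ with $j$ ones, and $1^j$ the partition of $j$ into $j$ ones. *)

(* Defs.v *)
From HB Require Import structures.
From mathcomp Require Import all_boot all_order all_algebra.
From mathcomp Require Import all_classical all_reals.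
From mathcomp Require Import topology normedtype.

Set Implicit Arguments.
Unset Strict Implicit.
Unset Printing Implicit Defensive.

Import Order.TTheory GRing.Theory Num.Theory.
Import numFieldNormedType.Exports.
Local Open Scope classical_set_scope.
Local Open Scope ring_scope.

(* A point of Sym^k(X) = X^k / S_k is recorded by its multiplicity      *)
(* function X -> nat (the S_k-orbit of u : X^k is determined by it).    *)

Definition power (X : topologicalType) (k : nat) := {ptws 'I_k -> X}.

Definition mult (X : topologicalType) (k : nat) (u : 'I_k -> X) : X -> nat :=
  fun x => #|[pred i : 'I_k | u i == x]|%N.

(* The carrier of Sym^k(X): multiplicity functions (only those in the
   range of [mult] are points of Sym^k(X), see [Sym] below). *)
Definition symprod (X : topologicalType) (k : nat) : Type := X -> nat.

HB.instance Definition _ (X : topologicalType) (k : nat) :=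
  gen_eqMixin (symprod X k).
HB.instance Definition _ (X : topologicalType) (k : nat) :=
  gen_choiceMixin (symprod X k).

Section symprod_topology.
Context (X : topologicalType) (k : nat).

Let pi : power X k -> symprod X k := @mult X k.

Definition sym_open (U : set (symprod X k)) := open (pi @^-1` U).

Let sym_openT : sym_open setT.
Proof. by rewrite /sym_open preimage_setT; exact: openT. Qed.

Let sym_openI : setI_closed sym_open.
Proof. by move=> A B oA oB; rewrite /sym_open preimage_setI; exact: openI. Qed.

Let sym_open_bigU (I : Type) (f : I -> set (symprod X k)) :
  (forall i, sym_open (f i)) -> sym_open (\bigcup_i f i).
Proof.
move=> of_; rewrite /sym_open preimage_bigcup.
by apply: bigcup_open => i _; exact: of_.
Qed.

HB.instance Definition _ :=
  isOpenTopological.Build (symprod X k) sym_openT sym_openI sym_open_bigU.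

End symprod_topology.

Definition Sym (X : topologicalType) (k : nat) : set (symprod X k) :=
  range (@mult X k).
Arguments Sym : clear implicits.

(* w_lambda(X): points of Sym^k(X) whose associated partition is lambda,
   i.e. the nonzero multiplicities, listed over a duplicate-free
   enumeration of the support, form (up to order) the list lambda. *)
Definition w (X : topologicalType) (k : nat) (lam : seq nat)
  : set (symprod X k) :=
  [set m | Sym X k m /\
     exists s : seq X, [/\ uniq s, (forall x, (m x != 0)%N -> x \in s)
                         & perm_eq [seq m x | x <- s] lam]].
Arguments w : clear implicits.

Definition part_1j2 (j : nat) : seq nat := rcons (nseq j 1%N) 2%N.
Definition part_1j (j : nat) : seq nat := nseq j 1%N.

Definition homotopic_on (R : realType) (T U : topologicalType)
  (A : set T) (B : set U) (f g : T -> U) :=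
  exists H : (R * T)%type -> U,
    [/\ {within (`[0, 1] `*` A), continuous H},
        H @` (`[0, 1] `*` A) `<=` B,
        (forall x, A x -> H (0, x) = f x) &
        (forall x, A x -> H (1, x) = g x)].
Arguments homotopic_on : clear implicits.

Definition homotopy_equivalent (R : realType) (T U : topologicalType)
  (A : set T) (B : set U) :=
  exists (f : T -> U) (g : U -> T),
    [/\ {within A, continuous f}, f @` A `<=` B,
        {within B, continuous g} & g @` B `<=` A] /\
    homotopic_on R T T A A (g \o f) id /\
    homotopic_on R U U B B (f \o g) id.

(* C^d, as a topological space, is R^(2d). *)
Definition Cd (R : realType) (d : nat) := 'rV[R]_(2 * d).

(* Main.v *)
Require Import Defs.
From HB Require Import structures.
From mathcomp Require Import all_boot all_order all_algebra.
From mathcomp Require Import all_classical all_reals.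
From mathcomp Require Import topology normedtype.

Import numFieldNormedType.Exports.
Local Open Scope classical_set_scope.
Local Open Scope ring_scope.
From mathcomp Require Import fingroup perm.
From mathcomp Require Import zify.
Set Implicit Arguments. Unset Strict Implicit. Unset Printing Implicit Defensive.
Import Order.TTheory GRing.Theory Num.Theory.
Lemma ptws_cvg (I : Type) (X : topologicalType) (T : Type) (F : set_system T)
  (FF : Filter F) (g : T -> {ptws I -> X}) (f : {ptws I -> X}) :
  (forall i, (fun t => g t i) @ F --> f i) -> g @ F --> f.
Proof.
move=> h; apply/cvg_sup => i.
move=> U [? /= [[W oW <-]] Wfi] /filterS; apply.
by apply: (h i); exact: open_nbhs_nbhs.
Qed.

#[global] Instance power_filter (X : topologicalType) k (u : power X k) :
  Filter (nbhs u) := @nbhs_filter (power X k) u.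

Section General.
Context (X : topologicalType) (k : nat).

Lemma card_count (T : finType) (P : pred T) : #|[pred i | P i]| = count P (enum T).
Proof.
rewrite -size_filter cardE /enum_mem -enumT /= -filter_predI; congr size.
by apply: eq_filter => x /=; rewrite !inE andbT.
Qed.

Lemma mult_count (u : 'I_k -> X) x :
  mult u x = count_mem x [seq u i | i <- enum 'I_k].
Proof. by rewrite count_map -(@card_count _ (fun i => u i == x)). Qed.

Lemma mult_perm (s : {perm 'I_k}) (u : 'I_k -> X) : mult (u \o s) = mult u.
Proof.
apply: funext => x; rewrite !mult_count.
have pe : perm_eq [seq s i | i <- enum 'I_k] (enum 'I_k).
  apply: uniq_perm; first by rewrite map_inj_uniq ?enum_uniq //; exact: perm_inj.
    exact: enum_uniq.
  move=> i; rewrite mem_enum; apply/mapP; exists (s^-1 i)%g; first by rewrite mem_enum.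
  by rewrite permKV.
have := perm_map u pe; rewrite -map_comp => /seq.permP; exact.
Qed.

Lemma mult_perm_eq (u v : 'I_k -> X) :
  mult u = mult v -> exists s : {perm 'I_k}, v = u \o s.
Proof.
move=> e.
have pe : perm_eq [tuple v i | i < k] [tuple u i | i < k].
  apply/allP => x _; apply/eqP.
  by rewrite /= -!mult_count e.
have [s hs] := tuple_permP pe.
exists s; apply: funext => i /=.
have := congr1 (fun t : k.-tuple X => tnth t i) (val_inj hs).
by rewrite /= !tnth_mktuple.
Qed.

Lemma comp_perm_cont (s : {perm 'I_k}) :
  continuous ((fun v => v \o s) : power X k -> power X k).
Proof.
move=> v; apply: (@ptws_cvg _ _ _ (nbhs (v : power X k))) => t.
exact: (@proj_continuous _ (fun=> X) (s t) v).
Qed.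

Lemma mult_cont : continuous (@mult X k : power X k -> symprod X k).
Proof. by apply/continuousP => U oU. Qed.

Lemma mult_open (O : set (power X k)) :
  open O -> @open (symprod X k) (@mult X k @` O).
Proof.
move=> oO.
suff : open ((@mult X k : power X k -> symprod X k) @^-1` (@mult X k @` O)) by [].
have -> : (@mult X k : power X k -> symprod X k) @^-1` (@mult X k @` O) =
    \bigcup_(s in [set: {perm 'I_k}]) ((fun v : power X k => v \o s) @^-1` O).
  apply/seteqP; split => v /=.
  - case=> u Ou e; have [s hs] := @mult_perm_eq v u (esym e).
    by exists s => //=; rewrite -hs.
  - by case=> s _ Os; exists (v \o s) => //; exact: mult_perm.
apply: bigcup_open => s _.
by move/continuousP: (@comp_perm_cont s); apply.
Qed.

Lemma near_mult (P : set (power X k)) (u0 : power X k) :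
  (\forall u \near u0, P u) ->
  \forall m \near (@mult X k u0 : symprod X k), exists u, mult u = m /\ P u.
Proof.
move=> h; have : nbhs u0 P by exact: h.
rewrite nbhsE => -[O [oO Ou0] OP].
apply: (@filterS _ _ _ (@mult X k @` O)).
  by move=> m [u Ou <-]; exists u; split => //; exact: OP.
by apply: open_nbhs_nbhs; split; [exact: mult_open | exists u0].
Qed.

Lemma near_mult2 (Y : topologicalType) (P : set (Y * power X k)) y0 (u0 : power X k) :
  (\forall q \near ((y0, u0) : Y * power X k), P q) ->
  \forall r \near ((y0, @mult X k u0) : Y * symprod X k),
    exists u, mult u = r.2 /\ P (r.1, u).
Proof.
case=> [[A B]] /= [nA nB] AB.
exists (A, [set m | exists u, mult u = m /\ B u]); first by split => //; exact: near_mult.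
case=> y m /= [Ay [u [e Bu]]]; exists u; split => //; exact: (AB (y, u)).
Qed.

End General.
Section Comb.
Context (Y : topologicalType) (j : nat).

Definition r0 : 'I_(j + 2) := @rshift j 2 ord0.
Definition r1 : 'I_(j + 2) := @rshift j 2 ord_max.
Definition RR : seq 'I_(j + 2) := [:: r0; r1].

Definition pairst (u : 'I_(j + 2) -> Y) :=
  u r0 = u r1 /\
  forall i i', i != i' -> u i = u i' -> (i \in RR) && (i' \in RR).

Lemma r01 : r0 != r1.
Proof. by rewrite -val_eqE /= eqn_add2l. Qed.

Lemma lshift_RR (i : 'I_j) : lshift 2 i \notin RR.
Proof.
apply/negP; rewrite !inE => /orP[] /eqP /(congr1 val) /= e;
  by have := ltn_ord i; lia.
Qed.

Lemma RR_cases (i : 'I_(j + 2)) : i \notin RR -> exists a, i = lshift 2 a.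
Proof.
case: (splitP i) => [a ea|b eb]; first by exists a; apply: val_inj.
rewrite !inE -!val_eqE /= eb; case: b eb => [[|[|b]] hb] //= eb.
- by rewrite addn0 eqxx.
- by rewrite eqxx orbT.
Qed.

Lemma mult_one n (u : 'I_n -> Y) i :
  (forall i', u i' = u i -> i' = i) -> mult u (u i) = 1%N.
Proof.
move=> h; rewrite /mult (eq_card (B := pred1 i)) ?card1 // => i'.
by rewrite !inE; apply/eqP/eqP => [/h|->].
Qed.

Lemma mult_two (u : 'I_(j + 2) -> Y) : pairst u -> mult u (u r0) = 2%N.
Proof.
case=> e h; rewrite /mult (eq_card (B := mem RR)).
  by apply/card_uniqP; rewrite /= inE r01.
move=> i; rewrite !inE; apply/eqP/idP.
  move=> ei; have [->|ne] := eqVneq i r0; first by rewrite /RR.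
  by move: (h _ _ ne ei); rewrite /RR !inE (negbTE ne) /= => /andP[].
by case/orP => /eqP ->.
Qed.

End Comb.
Arguments r0 {j}. Arguments r1 {j}. Arguments RR {j}.
Lemma map_cst (A B : Type) (s : seq A) (b : B) : [seq b | _ <- s] = nseq (size s) b.
Proof. by elim: s => //= a s ->. Qed.

Lemma card_ge (T : finType) (P : pred T) (s : seq T) :
  uniq s -> all P s -> (size s <= #|[pred i | P i]|)%N.
Proof.
move=> us /allP aP; rewrite -(card_uniqP us); apply: subset_leq_card.
by apply/fintype.subsetP => x xs; rewrite inE; exact: aP.
Qed.

Lemma mult_nz (Y : topologicalType) n (u : 'I_n -> Y) x :
  (mult u x != 0)%N -> exists i, u i = x.
Proof.
rewrite -lt0n => /card_gt0P [i]; rewrite inE => /eqP ei; by exists i.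
Qed.

Section Comb2.
Context (Y : topologicalType).

Lemma w_inj n (v : 'I_n -> Y) : injective v -> w Y n (part_1j n) (mult v).
Proof.
move=> iv; split; first by exists v.
exists [seq v i | i <- enum 'I_n]; split.
- by rewrite map_inj_uniq ?enum_uniq.
- by move=> x /mult_nz [i <-]; apply: map_f; rewrite mem_enum.
rewrite -map_comp (@eq_map _ _ _ (fun=> 1%N)) ?map_cst ?size_enum_ord //.
by move=> i /=; apply: mult_one => i' /iv.
Qed.

Context (j : nat).

Lemma w_pair (u : 'I_(j + 2) -> Y) : pairst u -> w Y (j + 2) (part_1j2 j) (mult u).
Proof.
move=> pu; case: (pu) => e h; split; first by exists u.
have Lne (i : 'I_j) i' : i' != lshift 2 i -> u i' = u (lshift 2 i) -> False.
  move=> ne ei; move: (h _ _ ne ei); rewrite (negbTE (lshift_RR i)).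
  by rewrite andbF.
exists (rcons [seq u (lshift 2 i) | i <- enum 'I_j] (u r0)); split.
- rewrite rcons_uniq; apply/andP; split.
    apply/mapP => -[i _ ei]; apply: (Lne i r0) => //.
    by apply: contra (lshift_RR i) => /eqP <-; rewrite /RR !inE eqxx.
  rewrite map_inj_uniq ?enum_uniq // => i1 i2 ei; apply/eqP/negPn/negP => ne.
  by apply: (Lne i2 (lshift 2 i1)).
- move=> x /mult_nz [i <-]; rewrite mem_rcons inE.
  case: (boolP (i \in RR)) => iR.
    by move: iR; rewrite /RR !inE => /orP[] /eqP ->; rewrite ?e eqxx.
  have [a ->] := RR_cases iR; apply/orP; right; apply: map_f; by rewrite mem_enum.
rewrite map_rcons -map_comp mult_two // /part_1j2.
rewrite (@eq_map _ _ _ (fun=> 1%N)) ?map_cst ?size_enum_ord //.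
move=> i /=; apply: mult_one => i' ei'; apply/eqP/negPn/negP => ne.
exact: (Lne i i').
Qed.

Lemma wA_le2 m : w Y (j + 2) (part_1j2 j) m -> forall x, (m x <= 2)%N.
Proof.
case=> _ [s [us sup pe]] x; case: (eqVneq (m x) 0%N) => [->//|nz].
have : m x \in rcons (nseq j 1%N) 2%N.
  by rewrite -(perm_mem pe); apply: map_f; exact: sup.
by rewrite mem_rcons inE mem_nseq => /orP[/eqP->//|/andP[_ /eqP->]].
Qed.

Lemma wA_ex2 m : w Y (j + 2) (part_1j2 j) m -> exists x, m x = 2%N.
Proof.
case=> _ [s [us sup pe]].
have : 2%N \in [seq m x | x <- s] by rewrite (perm_mem pe) mem_rcons inE eqxx.
by case/mapP => x _ ->; exists x.
Qed.

Lemma wA_uniq2 m : w Y (j + 2) (part_1j2 j) m ->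
  forall x y, m x = 2%N -> m y = 2%N -> x = y.
Proof.
case=> _ [s [us sup pe]] x y mx my; apply/eqP/negPn/negP => ne.
have c1 : count (fun z => m z == 2%N) s = 1%N.
  have := seq.permP pe (pred1 2%N); rewrite count_map => ->.
  by rewrite /part_1j2 -cats1 count_cat count_nseq /= mul0n.
have : (size [:: x; y] <= count (fun z => m z == 2%N) s)%N.
  rewrite -size_filter; apply: uniq_leq_size; first by rewrite /= inE ne.
  move=> z; rewrite !inE mem_filter => /orP[] /eqP ->.
    by rewrite mx eqxx sup // mx.
  by rewrite my eqxx sup // my.
by rewrite c1.
Qed.

Lemma wB_le1 n m : w Y n (part_1j n) m -> forall x, (m x <= 1)%N.
Proof.
case=> _ [s [us sup pe]] x; case: (eqVneq (m x) 0%N) => [->//|nz].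
have : m x \in nseq n 1%N.
  by rewrite -(perm_mem pe); apply: map_f; exact: sup.
by rewrite mem_nseq => /andP[_ /eqP->].
Qed.

End Comb2.
Lemma fiber_ge (Y : topologicalType) n (u : 'I_n -> Y) (s : seq 'I_n) y :
  uniq s -> (forall i, i \in s -> u i = y) -> (size s <= mult u y)%N.
Proof.
move=> us h; apply: (@card_ge _ (fun i => u i == y)) => //.
by apply/allP => i /h ->.
Qed.

Lemma lift_A (Y : topologicalType) j m :
  w Y (j + 2) (part_1j2 j) m -> exists u : 'I_(j + 2) -> Y, pairst u /\ mult u = m.
Proof.
move=> wm; have := wm; case=> -[u' _ eu'] _.
have [x0 m2] := wA_ex2 wm.
have c2 : mult u' x0 = 2%N by rewrite eu'.
have [a Pa] : exists a, u' a = x0 by apply: mult_nz; rewrite c2.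
have [b [ba Pb]] : exists b, b != a /\ u' b = x0.
  move: c2; rewrite /mult (cardD1 a) inE Pa eqxx add1n => -[c1].
  have : (0 < #|[predD1 [pred i | u' i == x0] & a]|)%N by rewrite c1.
  by case/card_gt0P => b; rewrite !inE => /andP[ba /eqP Pb]; exists b.
pose t1 := tperm r0 a; pose t2 := tperm r1 (t1 b); pose sg := (t2 * t1)%g.
have t1b : t1 b != r0.
  apply: contra ba => /eqP e; apply/eqP; apply: (@perm_inj _ t1).
  by rewrite e /t1 tpermR.
have s0 : sg r0 = a.
  by rewrite permM [t2 r0]tpermD ?tpermL // eq_sym r01.
have s1 : sg r1 = b by rewrite permM tpermL tpermK.
have mu : mult (u' \o sg) = m by rewrite -eu'; apply: mult_perm.
exists (u' \o sg); split => //.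
have u0 : (u' \o sg) r0 = x0 by rewrite /= s0.
have u1 : (u' \o sg) r1 = x0 by rewrite /= s1.
split; first by rewrite u0 u1.
move=> i i' ne ei.
have yx0 : (u' \o sg) i = x0.
  apply: (wA_uniq2 wm) => //; apply/eqP; rewrite eqn_leq (wA_le2 wm) /=.
  rewrite -mu; apply: (fiber_ge (s := [:: i; i'])); first by rewrite /= inE ne.
  by move=> z; rewrite !inE => /orP[] /eqP ->.
have inR z : (u' \o sg) z = x0 -> z \in RR.
  move=> uz; apply/negPn/negP => zR.
  suff : (3 <= 2)%N by [].
  rewrite -[X in (_ <= X)%N]m2 -mu.
  apply: (@fiber_ge _ _ (u' \o sg) [:: r0; r1; z] x0).
    move: zR; rewrite /RR !inE negb_or => /andP[z0 z1].
    by rewrite /= !inE negb_or r01 ![_ == z]eq_sym z0 z1.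
  by move=> q; rewrite !inE => /orP[/eqP->|/orP[]/eqP->].
by rewrite !inR // -ei.
Qed.

Lemma fiber2 (Y : topologicalType) n (u : 'I_n -> Y) y :
  mult u y = 2%N -> exists a b, [/\ b != a, u a = y & u b = y].
Proof.
move=> c2; have [a Pa] : exists a, u a = y by apply: mult_nz; rewrite c2.
move: c2; rewrite /mult (cardD1 a) inE Pa eqxx add1n => -[c1].
have : (0 < #|[predD1 [pred i | u i == y] & a]|)%N by rewrite c1.
by case/card_gt0P => b; rewrite !inE => /andP[ba /eqP Pb]; exists a, b.
Qed.

Lemma card_split n m (P : pred 'I_(n + m)) :
  #|[pred i | P i]| = (#|[pred a : 'I_n | P (lshift m a)]| +
                       #|[pred b : 'I_m | P (rshift n b)]|)%N.
Proof. by rewrite -!sum1_card big_split_ord. Qed.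

Lemma mult_split (Y : topologicalType) n m (u : 'I_(n + m) -> Y) y :
  mult u y = (#|[pred a : 'I_n | u (lshift m a) == y]| +
              #|[pred b : 'I_m | u (rshift n b) == y]|)%N.
Proof. exact: (@card_split n m (fun i => u i == y)). Qed.

Lemma rshift_RR j (b : 'I_2) : rshift j b \in RR.
Proof.
rewrite /RR !inE -!val_eqE /=; case: b => [[|[|b]] hb] //=.
by rewrite addn0 eqxx.
by rewrite eqxx orbT.
Qed.

Lemma pairst_RR (Y : topologicalType) j (u : 'I_(j + 2) -> Y) i :
  pairst u -> i \in RR -> u i = u r0.
Proof. by case=> e _; rewrite /RR !inE => /orP[] /eqP ->. Qed.
Section Main.
Context (R : realType) (d j : nat) (p : Cd R d) (q0 : set_type [set~ p]).
Local Notation X := (Cd R d).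
Local Notation XB := (set_type [set~ p]).
Local Notation A := (w X (j + 2) (part_1j2 j)).
Local Notation B := (w XB j (part_1j j)).

Definition toB (x : X) : XB := insubd q0 x.

Lemma toBK x : x != p -> val (toB x) = x.
Proof. by move=> nx; rewrite insubdK //; apply/mem_set => /= /eqP; rewrite (negbTE nx). Qed.

Lemma valB (z : XB) : val z != p.
Proof. by case: z => /= x /set_mem /= /eqP. Qed.

Lemma toB_val (z : XB) : toB (val z) = z.
Proof. by apply: val_inj; rewrite toBK // valB. Qed.

Lemma near_sep k (u0 : power X k) i i' : u0 i != u0 i' ->
  \forall v \near u0, v i != v i'.
Proof.
move=> ne; have := @norm_hausdorff R X; rewrite open_hausdorff.
move=> /(_ _ _ ne) [[U V] /= [uU uV] [oU oV /eqP UV]].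
have hU : \forall v \near u0, U (v i).
  by apply: (@proj_continuous _ (fun=> X) i u0); apply: open_nbhs_nbhs; split => //; exact: set_mem.
have hV : \forall v \near u0, V (v i').
  by apply: (@proj_continuous _ (fun=> X) i' u0); apply: open_nbhs_nbhs; split => //; exact: set_mem.
apply: (@filterS2 _ (nbhs (u0 : power X k)) _ _ _ _ _ hU hV) => v vU vV; apply/eqP => e.
have : (U `&` V) (v i) by split => //; rewrite e.
by rewrite UV.
Qed.

Lemma near_pairst (u0 : power X (j + 2)) : pairst u0 ->
  \forall v \near u0, A (mult v) -> pairst v.
Proof.
case=> e h.
have H : \forall v \near u0, forall i i' : 'I_(j + 2),
    [|| (i \in RR) && (i' \in RR), i == i' | v i != v i'].
  apply: (@filter_forall _ _ _ (nbhs (u0 : power X (j + 2)))) => i.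
  apply: (@filter_forall _ _ _ (nbhs (u0 : power X (j + 2)))) => i'.
  case: (boolP ((i \in RR) && (i' \in RR))) => [_|nR]; first by apply: nearW.
  case: (eqVneq i i') => [_|ne]; first by apply: nearW => v; rewrite orbT.
  have : u0 i != u0 i' by apply/eqP => ei; move: (h _ _ ne ei); rewrite (negbTE nR).
  by move/near_sep; apply: filterS => v ->; rewrite !orbT.
apply: filterS H => v Hv Av.
have Hp : forall i i', i != i' -> v i = v i' -> (i \in RR) && (i' \in RR).
  by move=> i i' ne ei; move: (Hv i i'); rewrite (negbTE ne) ei eqxx !orbF.
split => //.
have [x0 m2] := wA_ex2 Av.
have [a [b [ba va vb]]] := fiber2 m2.
have := Hp _ _ ba (etrans vb (esym va)); rewrite /RR !inE.
case/andP => /orP[] /eqP bR /orP[] /eqP aR; move: ba; rewrite bR aR ?eqxx //.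
- by move=> _; rewrite -bR -aR vb va.
- by move=> _; rewrite -bR -aR vb va.
Qed.

Definition cA (m : symprod X (j + 2)) : X := xget p [set x | m x = 2%N].

Lemma cA_spec m : A m -> m (cA m) = 2%N.
Proof. by move=> Am; apply: (@xgetPex _ p [set x | m x = 2%N]); exact: wA_ex2 Am. Qed.

Lemma cA_mult (u : 'I_(j + 2) -> X) : pairst u -> cA (mult u) = u r0.
Proof.
move=> pu; apply: (wA_uniq2 (w_pair pu)); first exact: cA_spec (w_pair pu).
exact: mult_two pu.
Qed.

Definition fA (m : symprod X (j + 2)) : symprod XB j :=
  fun z => m (val z + cA m - p).
Definition gB (n : symprod XB j) : symprod X (j + 2) :=
  fun x => if x == p then 2%N else n (toB x).
Definition Hm (tm : R * symprod X (j + 2)) : symprod X (j + 2) :=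
  fun x => tm.2 (x + (1 - tm.1) *: (cA tm.2 - p)).
Definition ext (u : 'I_j -> XB) : 'I_(j + 2) -> X :=
  fun i => match fintype.split i with inl a => val (u a) | inr _ => p end.

Lemma ext_l u a : ext u (lshift 2 a) = val (u a).
Proof. by rewrite /ext -[lshift 2 a]/(unsplit (inl a)) unsplitK. Qed.

Lemma ext_r u b : ext u (rshift j b) = p.
Proof. by rewrite /ext -[rshift j b]/(unsplit (inr b)) unsplitK. Qed.

Lemma g_mult u : gB (mult u) = mult (ext u).
Proof.
apply: funext => x; rewrite /gB mult_split.
case: eqVneq => [->|nx].
  rewrite eq_card0; last by move=> a; rewrite !inE ext_l (negbTE (valB _)).
  have -> : #|[pred b : 'I_2 | ext u (rshift j b) == p]| = #|'I_2|.
    by apply: eq_card => b; rewrite !inE ext_r eqxx.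
  by rewrite card_ord.
rewrite [X in (_ + X)%N]eq_card0 ?addn0; last first.
  by move=> b; rewrite !inE ext_r eq_sym (negbTE nx).
rewrite /mult; apply: eq_card => a; rewrite !inE ext_l.
by rewrite -[in RHS](toBK nx) val_eqE.
Qed.

Lemma eq_shift (V : zmodType) (x y c q : V) : (x == y + c - q) = (x - c + q == y).
Proof.
apply/eqP/eqP => [->|<-]; first by rewrite [y + c - q]addrAC addrK subrK.
by rewrite addrAC addrK subrK.
Qed.

Lemma fA_mult (v : 'I_(j + 2) -> X) : pairst v ->
  fA (mult v) = mult (fun a : 'I_j => toB (v (lshift 2 a) - v r0 + p)).
Proof.
move=> pv; apply: funext => z; rewrite /fA cA_mult // mult_split.
rewrite [X in (_ + X)%N]eq_card0 ?addn0; last first.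
  move=> b; rewrite !inE (pairst_RR pv (rshift_RR j b)).
  apply/negbTE/eqP => e; apply: (negP (valB z)); apply/eqP.
  move: e; rewrite addrAC -{1}[v r0]add0r => /addIr /esym /eqP.
  by rewrite subr_eq0 => /eqP.
rewrite /mult; apply: eq_card => a; rewrite !inE.
have ne : v (lshift 2 a) - v r0 + p != p.
  rewrite -subr_eq0 addrK subr_eq0; apply/eqP => ea.
  case: pv => _ h; have ne' : lshift 2 a != r0.
    by apply: contra (lshift_RR a) => /eqP ->; rewrite /RR !inE eqxx.
  by move: (h _ _ ne' ea); rewrite (negbTE (lshift_RR a)).
by rewrite eq_shift -[in LHS](toBK ne) val_eqE.
Qed.

Lemma H_mult t (v : 'I_(j + 2) -> X) : cA (mult v) = v r0 ->
  Hm (t, mult v) = mult (fun i => v i - (1 - t) *: (v r0 - p)).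
Proof.
move=> cv; apply: funext => x; rewrite /Hm /= cv /mult.
by apply: eq_card => i; rewrite !inE subr_eq.
Qed.

Lemma ext_cont : continuous (ext : power XB j -> power X (j + 2)).
Proof.
move=> u; apply: (@ptws_cvg _ _ _ (nbhs (u : power XB j))) => i.
rewrite /ext; case: (fintype.split i) => [a|b]; last exact: cvg_cst.
exact: (continuous_comp (@proj_continuous _ (fun=> XB) a u)
  (@initial_continuous _ _ (@set_val _ [set~ p]) (u a))).
Qed.

Lemma gB_cont : continuous gB.
Proof.
apply/continuousP => U oU.
suff : open ((@mult XB j : power XB j -> symprod XB j) @^-1` (gB @^-1` U)) by [].
have -> : (@mult XB j : power XB j -> symprod XB j) @^-1` (gB @^-1` U) =
    (ext : power XB j -> power X (j + 2)) @^-1`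
      ((@mult X (j + 2) : power X (j + 2) -> symprod X (j + 2)) @^-1` U).
  by apply/seteqP; split => u /=; rewrite g_mult.
by move/continuousP: ext_cont; apply.
Qed.

Lemma near_neqp (y : X) : y != p -> \forall y' \near y, y' != p.
Proof.
move=> ne; have := @norm_hausdorff R X; rewrite open_hausdorff.
move=> /(_ _ _ ne) [[U V] /= [uU uV] [oU oV /eqP UV]].
have : nbhs y U by apply: open_nbhs_nbhs; split => //; exact: set_mem.
apply: filterS => y' Uy'; apply/eqP => e.
have : (U `&` V) p by split; [rewrite -e | exact: set_mem].
by rewrite UV.
Qed.

Lemma toB_cont y : y != p -> {for y, continuous toB}.
Proof.
move=> ny U [? /= [[W oW <-] Wy] sub].
have hW : nbhs y W by apply: open_nbhs_nbhs; split => //; move: Wy; rewrite /preimage /= set_valE /= toBK.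
apply: (filterS2 _ _ hW (near_neqp ny)) => y' Wy' ny'.
by apply: sub; rewrite /preimage /= set_valE /= toBK.
Qed.

Lemma shift_neq (v : 'I_(j + 2) -> X) a : pairst v ->
  v (lshift 2 a) - v r0 + p != p.
Proof.
move=> pv; rewrite -subr_eq0 addrK subr_eq0; apply/eqP => ea.
case: pv => _ h; have ne' : lshift 2 a != r0.
  by apply: contra (lshift_RR a) => /eqP ->; rewrite /RR !inE eqxx.
by move: (h _ _ ne' ea); rewrite (negbTE (lshift_RR a)).
Qed.

Lemma fA_cont : {within A, continuous fA}.
Proof.
apply/subspace_continuousP => m Am.
have [u0 [pu <-]] := lift_A Am.
pose Gt := fun v : power X (j + 2) =>
  ((fun a : 'I_j => toB (v (lshift 2 a) - v r0 + p)) : power XB j).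
have cGt : {for u0, continuous Gt}.
  apply: (@ptws_cvg _ _ _ (nbhs (u0 : power X (j + 2)))) => a.
  apply: (@continuous_comp _ _ _ (fun v : power X (j + 2) => v (lshift 2 a) - v r0 + p) toB);
    last exact: toB_cont (shift_neq a pu).
  apply: (@cvgD _ _ _ _ _ (fun v : power X (j + 2) => v (lshift 2 a) - v r0) (fun=> p));
    last exact: cvg_cst.
  apply: (@cvgB _ _ _ _ _ (fun v : power X (j + 2) => v (lshift 2 a)) (fun v => v r0));
    exact: (@proj_continuous _ (fun=> X)).
move=> V nV.
have hG : \forall v \near (u0 : power X (j + 2)), V (mult (Gt v)).
  apply: (continuous_comp cGt (@mult_cont XB j (Gt u0))).
  by rewrite /= -(fA_mult pu).
have hP := near_pairst pu.
have : \forall v \near (u0 : power X (j + 2)), A (mult v) -> V (fA (mult v)).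
  apply: (filterS2 _ _ hG hP) => v Vv hv Av.
  by rewrite fA_mult //; exact: hv.
move/near_mult; apply: filterS => m' [v [<- Pv]] Am'.
exact: Pv.
Qed.

Lemma Hm_cont (S : set R) : {within (S `*` A), continuous Hm}.
Proof.
apply/subspace_continuousP => -[t0 m] [/= _ Am].
have [u0 [pu <-]] := lift_A Am.
pose Ght := fun q : R * power X (j + 2) =>
  ((fun i => q.2 i - (1 - q.1) *: (q.2 r0 - p)) : power X (j + 2)).
have cs (i : 'I_(j + 2)) : (fun q : R * power X (j + 2) => q.2 i) @ ((t0, u0) : R * power X (j + 2)) --> u0 i.
  have h1 : {for ((t0, u0) : R * power X (j + 2)), continuous snd}.
    exact: cvg_snd.
  exact: (continuous_comp h1 (@proj_continuous _ (fun=> X) i u0)).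
have cG : {for ((t0, u0) : R * power X (j + 2)), continuous Ght}.
  apply: (@ptws_cvg _ _ _ (nbhs ((t0, u0) : R * power X (j + 2)))) => i.
  apply: (@cvgB _ _ _ _ _ (fun q : R * power X (j + 2) => q.2 i)
     (fun q => (1 - q.1) *: (q.2 r0 - p))); first exact: cs.
  apply: cvgZ.
    apply: (@cvgB _ _ _ _ _ (fun=> (1 : R)) (fun q : R * power X (j + 2) => q.1));
      [exact: cvg_cst | exact: cvg_fst].
  apply: (@cvgB _ _ _ _ _ (fun q : R * power X (j + 2) => q.2 r0) (fun=> p));
    [exact: cs | exact: cvg_cst].
move=> V nV.
have hP : \forall q \near ((t0, u0) : R * power X (j + 2)), A (mult q.2) -> pairst q.2.
  exists ([set: R], [set v : power X (j + 2) | A (mult v) -> pairst v]) => /=.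
    by split; [exact: filterT | exact: near_pairst pu].
  by move=> [t v] [_ h].
have hG : \forall q \near ((t0, u0) : R * power X (j + 2)), V (mult (Ght q)).
  apply: (continuous_comp cG (@mult_cont X (j + 2) (Ght (t0, u0)))).
  by rewrite /= -(H_mult t0 (cA_mult pu)).
have : \forall q \near ((t0, u0) : R * power X (j + 2)),
    A (mult q.2) -> V (Hm (q.1, mult q.2)).
  apply: (filterS2 _ _ hG hP) => -[t v] /= Vv hv Av.
  by rewrite H_mult ?cA_mult //; exact: hv.
move/near_mult2; apply: filterS => -[t m'] /= [v [<- Pv]] [_ Am'].
exact: Pv.
Qed.

Lemma fA_img : fA @` A `<=` B.
Proof.
move=> _ [m Am <-]; have [u [pu <-]] := lift_A Am.
rewrite fA_mult //; apply: w_inj => a a' /(congr1 val).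
rewrite !toBK ?shift_neq // => /addIr /addIr ea.
apply/eqP/negPn/negP => ne.
have ne' : lshift 2 a != lshift 2 a' by [].
case: pu => _ h; move: (h _ _ ne' ea).
by rewrite (negbTE (lshift_RR a)).
Qed.

Lemma ext_pairst (u : 'I_j -> XB) : injective u -> pairst (ext u).
Proof.
move=> iu; split; first by rewrite /r0 /r1 !ext_r.
have extR i : i \in RR -> ext u i = p.
  by rewrite /RR !inE => /orP[] /eqP ->; rewrite /r0 /r1 ext_r.
have extL i : i \notin RR -> ext u i != p.
  by move/RR_cases => [a ->]; rewrite ext_l valB.
move=> i i' ne ei.
have [iR|iR] := boolP (i \in RR); have [i'R|i'R] := boolP (i' \in RR).
- by [].
- by move: (extL _ i'R); rewrite -ei (extR _ iR) eqxx.
- by move: (extL _ iR); rewrite ei (extR _ i'R) eqxx.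
have [a ea] := RR_cases iR; have [a' ea'] := RR_cases i'R.
move: ei ne; rewrite ea ea' !ext_l => /val_inj /iu ->.
by rewrite eqxx.
Qed.

Lemma gB_img : gB @` B `<=` A.
Proof.
move=> _ [n Bn <-]; have [[u _ eu] _] := Bn.
have iu : injective u.
  move=> a a' e; apply/eqP/negPn/negP => ne.
  have := wB_le1 Bn (u a); rewrite -eu.
  have : (size [:: a; a'] <= mult u (u a))%N.
    by apply: fiber_ge; [rewrite /= inE ne | move=> z; rewrite !inE => /orP[] /eqP ->].
  by move=> /leq_trans h /h.
by rewrite -eu g_mult; apply: w_pair; exact: ext_pairst.
Qed.

Lemma trans_pairst (v : 'I_(j + 2) -> X) s : pairst v -> pairst (fun i => v i - s).
Proof.
case=> e h; split; first by rewrite e.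
by move=> i i' ne /addIr ei; exact: h.
Qed.

Lemma Hm_img (S : set R) : Hm @` (S `*` A) `<=` A.
Proof.
move=> _ [[t m] /= [_ Am] <-]; have [u [pu <-]] := lift_A Am.
by rewrite H_mult ?cA_mult //; apply: w_pair; exact: trans_pairst.
Qed.

Lemma Hm0 m : A m -> Hm (0, m) = gB (fA m).
Proof.
move=> Am; apply: funext => x; rewrite /Hm /gB /fA /= subr0 scale1r.
case: eqVneq => [->|nx]; first by rewrite addrC subrK cA_spec.
by rewrite toBK // addrA.
Qed.

Lemma Hm1 m : Hm (1, m) = m.
Proof. by apply: funext => x; rewrite /Hm /= subrr scale0r addr0. Qed.

Lemma fg n : B n -> fA (gB n) = n.
Proof.
move=> Bn; have Ag : A (gB n) by apply: gB_img; exists n.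
have cp : cA (gB n) = p.
  apply: (wA_uniq2 Ag); first exact: cA_spec.
  by rewrite /gB eqxx.
apply: funext => z; rewrite /fA cp addrK /gB (negbTE (valB z)).
by rewrite toB_val.
Qed.

End Main.

Theorem mainTheorem3 (R : realType) (d j : nat) (p : Cd R d) :
  (1 <= d)%N ->
  homotopy_equivalent R
    (w (Cd R d) (j + 2) (part_1j2 j))
    (w (set_type [set~ p]) j (part_1j j)).
Proof.
move=> d1.
have [q0 _] : exists q : set_type [set~ p], True.
  have i0 : (0 < 2 * d)%N by rewrite muln_gt0 d1.
  have hx : (p + const_mx 1 : Cd R d) \in [set~ p].
    apply/mem_set => /= e.
    have : (p + const_mx 1 : Cd R d) 0 (Ordinal i0) = p 0 (Ordinal i0) by rewrite e.
    by rewrite !mxE => /eqP; rewrite -subr_eq0 addrAC subrr add0r oner_eq0.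
  by exists (@exist _ (fun x => x \in [set~ p]) _ hx).
exists (@fA R d j p), (@gB R d j p q0); split; last split.
- split.
  + exact: fA_cont.
  + exact: fA_img.
  + by apply: continuous_subspaceT; exact: gB_cont.
  + exact: gB_img.
- exists (@Hm R d j p); split.
  + exact: Hm_cont.
  + exact: Hm_img.
  + by move=> x Ax; rewrite (Hm0 q0).
  + by move=> x _; rewrite Hm1.
- exists snd; split.
  + by apply: continuous_subspaceT => x; exact: cvg_snd.
  + by move=> _ [[t n] [_ Bn] <-].
  + by move=> x Bx /=; rewrite (fg q0).
  + by [].
Qed.
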